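(* Let $\lambda$ be a partition, $\pi$ an $R_\lambda$-permutation, and $T\in\mathcal{T}_\lambda$ with $T\le Y_\lambda(\pi)$. Write $Y:=Y_\lambda(\pi)$. If there exists a box $(l,k)$ of $\lambda$ such that $Y_l(k)<m(U^{(l,k)})$, then $\pi$ is $R_\lambda$-312-containing.
   Context: Fix $n\ge1$; $[m]=\{1,\dots,m\}$. A partition is $\lambda=(\lambda_1\ge\cdots\ge\lambda_n\ge0)\in\mathbb{Z}^n$, with boxes $(j,i)$ (column $j$, row $i$), $1\le j\le\lambda_1$, $1\le i\le\zeta_j:=\#\{i:\lambda_i\ge j\}$; $R_\lambda:=\{\zeta_j:\zeta_j<n\}$ with elements $q_1<\dots<q_r$, $q_0:=0$, $q_{r+1}:=n$. An $R_\lambda$-permutation is a permutation $\pi$ of $[n]$ (one-line notation) strictly increasing on each index set $\{q_{h-1}+1,\dots,q_h\}$; it is $R_\lambda$-312-containing if there exist $h\in[r-1]$ and $1\le a\le q_h<b\le q_{h+1}<c\le n$ with $\pi_b<\pi_c<\pi_a$. A tableau of shape $\lambda$ fills the boxes with values in $[n]$, strictly increasing down columns and weakly increasing along rows; $\mathcal{T}_\lambda$ is their set, ordered entrywise. $T_j(i)$ is the entry at column $j$ row $i$. The $\lambda$-key $Y_\lambda(\pi)$ is the tableau whose column $j$ consists of $\{\pi_1,\dots,\pi_{\zeta_j}\}$ in increasing order. Scanning paths: the earliest weakly increasing subsequence (EWIS) of a sequence $x_1,x_2,\dots$ is $x_{i_1},x_{i_2},\dots$ with $i_1=1$ and $i_u$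 the smallest index $>i_{u-1}$ with $x_{i_u}\ge x_{i_{u-1}}$. For $T\in\mathcal{T}_\lambda$ and $l\in[\lambda_1]$: consider the boxes of $T$ in columns $l,\dots,\lambda_1$, initially unmarked; for $k=\zeta_l,\zeta_l-1,\dots,1$ in turn, form the sequence of the lowest unmarked entries of columns $l,l+1,\dots$ (left to right, over columns still having unmarked boxes), take its EWIS and mark the contributing boxes; this set of boxes is the scanning path $\mathcal{P}(T;l,k)$ (and the last term of the EWIS is the entry of the scanning tableau $S(T)$ at $(l,k)$). For a box $(l,k)$, $U^{(l,k)}$ is the collection of entries of $T$ in columns $l+1,\dots,\lambda_1$ at boxes not lying on any of the paths $\mathcal{P}(T;l,\zeta_l),\dots,\mathcal{P}(T;l,k+1)$; $m(U^{(l,k)})$ is the maximum of these entries, or $1$ if there are none. *)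

(* Defs.v *)
(* All indices are 1-based, as in the paper. *)
From mathcomp Require Import all_boot.
Set Implicit Arguments. Unset Strict Implicit. Unset Printing Implicit Defensive.

Definition is_partition (n : nat) (lam : seq nat) : bool :=
  (size lam == n) && sorted geq lam.

Definition lam1 (lam : seq nat) : nat := nth 0 lam 0.

Definition zeta (lam : seq nat) (j : nat) : nat := count (fun x => j <= x) lam.

(* (j,i) is a box: column j, row i *)
Definition is_box (lam : seq nat) (j i : nat) : bool :=
  [&& 1 <= j, j <= lam1 lam, 1 <= i & i <= zeta lam j].

Definition Rseq (n : nat) (lam : seq nat) : seq nat :=
  sort leq (undup [seq zeta lam j | j <- iota 1 (lam1 lam) & zeta lam j < n]).

Definition rR (n : nat) (lam : seq nat) : nat := size (Rseq n lam).

Definition q (n : nat) (lam : seq nat) (h : nat) : nat :=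
  if h == 0 then 0
  else if h <= rR n lam then nth 0 (Rseq n lam) h.-1 else n.

Definition is_perm (n : nat) (pi : seq nat) : bool := perm_eq pi (iota 1 n).
Definition pi_at (pi : seq nat) (i : nat) : nat := nth 0 pi i.-1.

Definition R_perm (n : nat) (lam : seq nat) (pi : seq nat) : Prop :=
  is_perm n pi /\
  forall h i, 1 <= h <= (rR n lam).+1 ->
    q n lam h.-1 + 1 <= i -> i < q n lam h -> pi_at pi i < pi_at pi i.+1.

Definition R_312_containing (n : nat) (lam : seq nat) (pi : seq nat) : Prop :=
  exists h a b c, [/\ 1 <= h <= (rR n lam).-1,
    [/\ 1 <= a, a <= q n lam h, q n lam h < b, b <= q n lam h.+1 & q n lam h.+1 < c],
    c <= n & pi_at pi b < pi_at pi c < pi_at pi a].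

(* tableaux: T j i = entry in column j, row i (only values at boxes matter) *)
Definition is_tableau (n : nat) (lam : seq nat) (T : nat -> nat -> nat) : Prop :=
  [/\ forall j i, is_box lam j i -> 1 <= T j i <= n,
      forall j i, is_box lam j i -> is_box lam j i.+1 -> T j i < T j i.+1
    & forall j i, is_box lam j i -> is_box lam j.+1 i -> T j i <= T j.+1 i].

Definition key (lam : seq nat) (pi : seq nat) (j i : nat) : nat :=
  nth 0 (sort leq (take (zeta lam j) pi)) i.-1.

Definition tab_le (lam : seq nat) (T T' : nat -> nat -> nat) : Prop :=
  forall j i, is_box lam j i -> T j i <= T' j i.

Fixpoint ewis_aux (last : nat) (s : seq (nat * nat)) : seq (nat * nat) :=
  match s with
  | [::] => [::]
  | x :: s' => if last <= x.2 then x :: ewis_aux x.2 s' else ewis_aux last s'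
  end.
Definition ewis (s : seq (nat * nat)) : seq (nat * nat) :=
  if s is x :: s' then x :: ewis_aux x.2 s' else [::].

(* In each column the marked boxes are always the lowest ones, so
   the marking state is recorded by cnt j = number of marked boxes in column j;
   the lowest unmarked box of column j is then row zeta_j - cnt j. *)
Definition lowest_seq (lam : seq nat) (T : nat -> nat -> nat) (l : nat)
  (cnt : nat -> nat) : seq (nat * nat) :=
  [seq (j, T j (zeta lam j - cnt j)) |
     j <- [seq j <- index_iota l (lam1 lam).+1 | cnt j < zeta lam j]].

Definition step_cols (lam : seq nat) (T : nat -> nat -> nat) (l : nat)
  (cnt : nat -> nat) : seq nat := [seq x.1 | x <- ewis (lowest_seq lam T l cnt)].

Definition step (lam : seq nat) (T : nat -> nat -> nat) (l : nat)
  (cnt : nat -> nat) : nat -> nat :=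
  fun j => cnt j + (j \in step_cols lam T l cnt).

Definition state (lam : seq nat) (T : nat -> nat -> nat) (l t : nat) : nat -> nat :=
  iter t (step lam T l) (fun _ => 0).

(* the scanning path P(T; l, k), a list of boxes (column, row);
   it is produced at step number zeta_l - k (counting from 0). *)
Definition scan_path (lam : seq nat) (T : nat -> nat -> nat) (l k : nat)
  : seq (nat * nat) :=
  let cnt := state lam T l (zeta lam l - k) in
  [seq (j, zeta lam j - cnt j) | j <- step_cols lam T l cnt].

Definition U_entries (lam : seq nat) (T : nat -> nat -> nat) (l k : nat) : seq nat :=
  [seq T p.1 p.2 |
     p <- [seq (j, i) | j <- index_iota l.+1 (lam1 lam).+1,
                        i <- iota 1 (zeta lam j)]
     & ~~ has (fun k' => p \in scan_path lam T l k') (index_iota k.+1 (zeta lam l).+1)].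

Definition mU (lam : seq nat) (T : nat -> nat -> nat) (l k : nat) : nat :=
  let U := U_entries lam T l k in
  if U is [::] then 1 else foldr maxn 0 U.

(* Main.v *)
Require Import Defs.
From mathcomp Require Import all_boot.
From mathcomp Require Import zify.
From Stdlib Require Import Classical.
Set Implicit Arguments. Unset Strict Implicit. Unset Printing Implicit Defensive.

Lemma count_pw (T0 : Type) (p1 p2 p3 : pred T0) (s : seq T0) :
  (forall x, p1 x + p2 x <= p3 x) -> count p1 s + count p2 s <= count p3 s.
Proof.
move=> H; elim: s => [|x s IH] //=.
have := H x; lia.
Qed.

Lemma count_take_le (T0 : Type) (p : pred T0) m (s : seq T0) :
  count p (take m s) <= count p s.
Proof. by rewrite -{2}(cat_take_drop m s) count_cat leq_addr. Qed.

Lemma sorted_nth_le (s : seq nat) i j : sorted leq s -> i <= j -> j < size s ->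
  nth 0 s i <= nth 0 s j.
Proof.
move=> Hs Hij Hj.
apply: (sorted_leq_nth leq_trans leqnn 0 Hs) => //; rewrite inE; lia.
Qed.

Lemma key_count_ge (s : seq nat) i z : sorted leq s -> 1 <= i <= size s ->
  z <= nth 0 s i.-1 -> size s - i < count (fun p => z <= p) s.
Proof.
case: i => [|i] Hs Hi; first by lia.
rewrite /= => Hz.
have H1: count (fun p => z <= p) (drop i s) = size (drop i s).
  apply/eqP; rewrite -all_count; apply/allP => x /(nthP 0) [j Hj <-].
  have {}Hj : j < size s - i by rewrite size_drop in Hj.
  rewrite nth_drop; apply: (leq_trans Hz); apply: sorted_nth_le => //; lia.
have E: count (fun p => z <= p) s = count (fun p => z <= p) (take i s) + count (fun p => z <= p) (drop i s) by rewrite -count_cat cat_take_drop.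
rewrite E H1 size_drop; lia.
Qed.

Lemma key_count_le (s : seq nat) k z : sorted leq s -> 1 <= k <= size s ->
  size s - k < count (fun p => z <= p) s -> z <= nth 0 s k.-1.
Proof.
case: k => [|k] Hs Hk; first by lia.
move=> Hc; rewrite /= leqNgt; apply/negP => Hz.
have H0: count (fun p => z <= p) (take k.+1 s) = 0.
  apply/eqP; rewrite -leqn0 leqNgt -has_count; apply/hasPn => x /(nthP 0) [j Hj <-].
  have Hk' : k.+1 <= size s by case/andP: Hk.
  rewrite size_takel // in Hj.
  rewrite nth_take //.
  rewrite -ltnNge; apply: leq_ltn_trans Hz; apply: sorted_nth_le => //; lia.
have E: count (fun p => z <= p) s = count (fun p => z <= p) (take k.+1 s) + count (fun p => z <= p) (drop k.+1 s) by rewrite -count_cat cat_take_drop.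
have := count_size (fun p => z <= p) (drop k.+1 s).
move: Hc; rewrite E H0 size_drop; lia.
Qed.
Lemma ewis_aux_sub last s : {subset ewis_aux last s <= s}.
Proof.
elim: s last => [|z s IH] last //= x.
case: ifP => _; rewrite ?inE.
- by case/orP => [->//|/IH ->]; rewrite orbT.
- by move/IH => ->; rewrite orbT.
Qed.

Lemma ewis_sub s : {subset ewis s <= s}.
Proof.
case: s => [|z s] //= x; rewrite !inE; case/orP => [->//|/ewis_aux_sub ->]; by rewrite orbT.
Qed.

Lemma ewis_aux_skip (s : seq (nat * nat)) (p : nat * nat) :
  sorted ltn (map fst (p :: s)) ->
  forall x, x \in s -> x.1 \notin map fst (ewis_aux p.2 s) ->
  forall y, y \in p :: ewis_aux p.2 s -> y.1 < x.1 ->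
  exists2 y', y' \in p :: ewis_aux p.2 s & (y.1 <= y'.1 < x.1) && (x.2 < y'.2).
Proof.
elim: s p => [|z s IH] p //= Hs x Hx Hnot y Hy Hyx.
move: Hs => /andP [Hpz Hs'].
have Hall : all (ltn z.1) (map fst s) := order_path_min ltn_trans Hs'.
have Hs2 : path ltn p.1 (map fst s) := path_le ltn_trans Hpz Hs'.
move: Hnot Hy; case: ifP => Hle Hnot Hy.
- move: Hx; rewrite inE => /orP [/eqP Ex|Hx].
    by move: Hnot; rewrite Ex /= inE eqxx.
  have Hnot' : x.1 \notin map fst (ewis_aux z.2 s).
    by move: Hnot; rewrite /= inE negb_or => /andP [].
  move: Hy; rewrite inE => /orP [/eqP Ey|Hy].
  + have Hzx : z.1 < x.1 by move/allP: Hall => /(_ _ (map_f fst Hx)).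
    have [y' Hy' Hc] := IH z Hs' x Hx Hnot' z (mem_head _ _) Hzx.
    exists y'; first by rewrite inE Hy' orbT.
    move: Hc => /andP [/andP [H1 H2] H3]; rewrite Ey H2 H3 andbT /=.
    by rewrite andbT (leq_trans (ltnW Hpz) H1).
  + have [y' Hy' Hc] := IH z Hs' x Hx Hnot' y Hy Hyx.
    by exists y' => //; rewrite inE Hy' orbT.
- move: Hx; rewrite inE => /orP [/eqP Ex|Hx].
  + move: Hy; rewrite inE => /orP [/eqP Ey|Hy].
      exists p; first exact: mem_head.
      rewrite Ey leqnn Ex /= Hpz /=; by rewrite ltnNge Hle.
    have := ewis_aux_sub Hy => Hys.
    move/allP: Hall => /(_ _ (map_f fst Hys)) /=; rewrite Ex in Hyx; lia.
  + have [y' Hy' Hc] := IH p Hs2 x Hx Hnot y Hy Hyx.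
    by exists y'.
Qed.

Lemma ewis_skip (s : seq (nat * nat)) : sorted ltn (map fst s) ->
  forall x, x \in s -> x.1 \notin map fst (ewis s) ->
  forall y, y \in ewis s -> y.1 < x.1 ->
  exists2 y', y' \in ewis s & (y.1 <= y'.1 < x.1) && (x.2 < y'.2).
Proof.
case: s => [|z s] //= Hs x Hx Hnot y Hy Hyx.
move: Hx; rewrite inE => /orP [/eqP Ex|Hx].
  by move: Hnot; rewrite Ex /= inE eqxx.
have Hnot' : x.1 \notin map fst (ewis_aux z.2 s) by move: Hnot; rewrite inE negb_or => /andP [].
exact: (ewis_aux_skip Hs Hx Hnot' Hy Hyx).
Qed.

Lemma zeta_anti lam j j' : j <= j' -> zeta lam j' <= zeta lam j.
Proof. move=> H; apply: sub_count => x /= Hx; exact: leq_trans H Hx. Qed.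

Lemma zeta_le_n n lam j : is_partition n lam -> zeta lam j <= n.
Proof. by case/andP => /eqP <- _; apply: count_size. Qed.

Lemma zeta_pos n lam j : is_partition n lam -> 1 <= n -> 1 <= j <= lam1 lam -> 1 <= zeta lam j.
Proof.
case/andP => /eqP Hs _ Hn /andP [_ Hj].
case: lam Hs Hj => [|x lam] /= Hs Hj; first by rewrite -Hs in Hn.
by rewrite /zeta /= Hj.
Qed.

Lemma zeta_in_R n lam j : 1 <= j <= lam1 lam -> zeta lam j < n -> zeta lam j \in Rseq n lam.
Proof.
move=> Hj Hz; rewrite /Rseq mem_sort mem_undup; apply: map_f.
rewrite mem_filter Hz /= mem_iota; lia.
Qed.

Lemma no312 n lam pi : is_partition n lam -> ~ R_312_containing n lam pi ->
  forall i0 i1 i2 zb za, zb \in Rseq n lam -> za \in Rseq n lam ->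
  i0 < zb -> zb <= i1 -> i1 < za -> za <= i2 -> i2 < n ->
  ~ (nth 0 pi i1 < nth 0 pi i2 < nth 0 pi i0).
Proof.
move=> Hp Hno i0 i1 i2 zb za Hzb Hza H0 H1 H2 H3 H4 Hv; apply: Hno.
set rs := Rseq n lam in Hzb Hza.
have Hsort : sorted leq rs by apply: sort_sorted; exact: leq_total.
set idx := find (fun x => i1 < x) rs.
have Hhas : has (fun x => i1 < x) rs by apply/hasP; exists za.
have Hidx : idx < size rs by rewrite -has_find.
have Hnidx : i1 < nth 0 rs idx by apply: (nth_find 0 Hhas).
have Hbef : forall i, i < idx -> nth 0 rs i <= i1.
  by move=> i Hi; have := before_find 0 Hi; rewrite /= => /negbT; rewrite -leqNgt.
set ib := index zb rs.
have Hib : ib < size rs by rewrite index_mem.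
have Ezb : nth 0 rs ib = zb by rewrite nth_index.
set ia := index za rs.
have Hia : ia < size rs by rewrite index_mem.
have Eza : nth 0 rs ia = za by rewrite nth_index.
have Hibidx : ib < idx.
  rewrite ltnNge; apply/negP => Hc.
  have := sorted_nth_le Hsort Hc Hib; lia.
have Hiaidx : idx <= ia.
  rewrite leqNgt; apply/negP => Hc; have := Hbef _ Hc; lia.
have Hq1 : zb <= nth 0 rs idx.-1.
  rewrite -Ezb; apply: sorted_nth_le => //; lia.
have Hq1' : nth 0 rs idx.-1 <= i1 by apply: Hbef; lia.
have Hq2 : nth 0 rs idx <= za by rewrite -Eza; apply: sorted_nth_le.
exists idx, i0.+1, i1.+1, i2.+1.
have Eq1 : q n lam idx = nth 0 rs idx.-1.
  rewrite /q /rR -/rs; have -> : (idx == 0) = false by apply/negbTE; lia.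
  by rewrite ifT //; apply: ltnW.
have Eq2 : q n lam idx.+1 = nth 0 rs idx by rewrite /q /rR -/rs /= ifT.
rewrite Eq1 Eq2 /rR -/rs /pi_at /=.
split; first by lia.
- split; lia.
- lia.
- exact: Hv.
Qed.

Definition Nc (lam pi : seq nat) j z := count (fun p => z <= p) (take (zeta lam j) pi).

Lemma size_take_zeta n lam pi j : is_partition n lam -> is_perm n pi ->
  size (take (zeta lam j) pi) = zeta lam j.
Proof.
move=> Hp Hpi; apply: size_takel.
by rewrite (perm_size Hpi) size_iota; apply: zeta_le_n Hp.
Qed.

Lemma FY n lam pi T j i : is_partition n lam -> is_perm n pi ->
  tab_le lam T (key lam pi) -> 1 <= j <= lam1 lam -> 1 <= i <= zeta lam j ->
  zeta lam j - i < Nc lam pi j (T j i).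
Proof.
move=> Hp Hpi Hle Hj Hi.
have Hb : is_box lam j i by rewrite /is_box; apply/and4P; split; lia.
have := Hle j i Hb; rewrite /key /Nc => H.
have Hs : size (sort leq (take (zeta lam j) pi)) = zeta lam j.
  by rewrite size_sort (size_take_zeta _ Hp Hpi).
rewrite -(count_sort leq) -{1}Hs; apply: key_count_ge => //.
- by apply: sort_sorted; exact: leq_total.
- by rewrite Hs.
Qed.

Lemma key_from_count n lam pi j k z : is_partition n lam -> is_perm n pi ->
  1 <= k <= zeta lam j -> zeta lam j - k < Nc lam pi j z -> z <= key lam pi j k.
Proof.
move=> Hp Hpi Hk; rewrite /key /Nc => H.
have Hs : size (sort leq (take (zeta lam j) pi)) = zeta lam j.
  by rewrite size_sort (size_take_zeta _ Hp Hpi).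
apply: key_count_le.
- by apply: sort_sorted; exact: leq_total.
- by rewrite Hs.
- by rewrite Hs count_sort.
Qed.

Lemma Nc_mono lam pi a b z : a <= b -> Nc lam pi b z <= Nc lam pi a z.
Proof.
move=> H; rewrite /Nc -(@take_takel _ (zeta lam b) (zeta lam a)); last exact: zeta_anti.
exact: count_take_le.
Qed.

Lemma T_row n lam T a b i : is_tableau n lam T -> 1 <= a -> a <= b -> b <= lam1 lam ->
  1 <= i <= zeta lam b -> T a i <= T b i.
Proof.
case=> _ _ Hr Ha Hab; rewrite -(subnKC Hab); elim: (b - a) => [|k IH]; first by rewrite addn0.
rewrite addnS => Hb Hi.
have Hb' : a + k <= lam1 lam by lia.
have Hz : zeta lam (a + k).+1 <= zeta lam (a + k) by apply: zeta_anti.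
apply: leq_trans (IH Hb' _) _; first by lia.
apply: Hr; rewrite /is_box; apply/and4P; split; lia.
Qed.

Lemma T_col n lam T j i d : is_tableau n lam T -> 1 <= j <= lam1 lam -> 1 <= i ->
  i + d <= zeta lam j -> T j i + d <= T j (i + d).
Proof.
case=> _ Hc _ Hj Hi; elim: d => [|d IH] Hd; first by rewrite !addn0.
rewrite addnS in Hd.
have := IH (ltnW Hd).
have : T j (i + d) < T j (i + d).+1.
  apply: Hc; rewrite /is_box; apply/and4P; split; lia.
rewrite addnS addnS; lia.
Qed.

Lemma T_range n lam T j i : is_tableau n lam T -> 1 <= j <= lam1 lam -> 1 <= i <= zeta lam j ->
  1 <= T j i <= n.
Proof.
case=> H _ _ Hj Hi; apply: H; rewrite /is_box; apply/and4P; split; lia.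
Qed.

Lemma stateS lam T l t : state lam T l t.+1 = step lam T l (state lam T l t).
Proof. by []. Qed.

Lemma V1 lam T l c j : j \in step_cols lam T l c -> (l <= j <= lam1 lam) && (c j < zeta lam j).
Proof.
case/mapP => x Hx ->; have := ewis_sub Hx; case/mapP => j' Hj' -> /=.
by move: Hj'; rewrite mem_filter mem_index_iota => /andP [-> H]; rewrite andbT; lia.
Qed.

Lemma V2 lam T l c : l <= lam1 lam -> c l < zeta lam l -> l \in step_cols lam T l c.
Proof.
move=> Hl Hc; rewrite /step_cols /lowest_seq /index_iota.
have -> : (lam1 lam).+1 - l = (lam1 lam - l).+1 by lia.
by rewrite /= Hc /=; apply: mem_head.
Qed.

Lemma V3 lam T l c j a : l <= j <= lam1 lam -> c j < zeta lam j ->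
  j \notin step_cols lam T l c -> a \in step_cols lam T l c -> a < j ->
  exists a', [/\ a' \in step_cols lam T l c, a <= a' < j &
    T j (zeta lam j - c j) < T a' (zeta lam a' - c a')].
Proof.
move=> Hj Hc Hnot Ha Haj.
set filt := [seq j <- index_iota l (lam1 lam).+1 | c j < zeta lam j].
have Hs : sorted ltn (map fst (lowest_seq lam T l c)).
  rewrite /lowest_seq -/filt -map_comp map_id_in //.
  apply: sorted_filter; first exact: ltn_trans.
  exact: iota_ltn_sorted.
have Hx : (j, T j (zeta lam j - c j)) \in lowest_seq lam T l c.
  by apply: (map_f (fun j => (j, T j (zeta lam j - c j)))); rewrite mem_filter Hc mem_index_iota; lia.
case/mapP: Ha => y Hy Ey.
have Hyj : y.1 < (j, T j (zeta lam j - c j)).1 by rewrite -Ey.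
have [y' Hy' /andP [/andP [H1 H2] H3]] := ewis_skip Hs Hx Hnot Hy Hyj.
have := ewis_sub Hy'; case/mapP => a' _ Ey'.
exists a'; split.
- by apply/mapP; exists y'; rewrite // Ey'.
- by move: H1 H2; rewrite Ey' -Ey /=; lia.
- by move: H3; rewrite Ey'.
Qed.

Lemma inv_step n lam pi T l (c : nat -> nat) : 1 <= n -> is_partition n lam -> is_perm n pi ->
  is_tableau n lam T -> tab_le lam T (key lam pi) -> ~ R_312_containing n lam pi -> 1 <= l ->
  (forall j, c j <= zeta lam j) ->
  (forall a b, l <= a -> a <= b -> b <= lam1 lam ->
     zeta lam b - c b <= zeta lam a - c a /\
     forall d, d < zeta lam b - c b -> c a + d < Nc lam pi a (T b (zeta lam b - c b - d))) ->
  forall a b, l <= a -> a <= b -> b <= lam1 lam ->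
     zeta lam b - step lam T l c b <= zeta lam a - step lam T l c a /\
     forall d, d < zeta lam b - step lam T l c b ->
       step lam T l c a + d < Nc lam pi a (T b (zeta lam b - step lam T l c b - d)).
Proof.
move=> Hn Hp Hpi Htab Hle Hno Hl HC HI a b Hla Hab Hbl.
rewrite /step.
set V := step_cols lam T l c.
have [HR HQ] := HI a b Hla Hab Hbl.
case: (boolP (b \in V)) => HbV.
  have /andP [_ Hcb] := V1 HbV.
  split; first by case: (a \in V) => /=; lia.
  move=> d Hd.
  have -> : zeta lam b - (c b + true) - d = zeta lam b - c b - d.+1 by rewrite /=; lia.
  have := HQ d.+1 ltac:(move: Hd => /=; lia).
  case: (a \in V) => /=; lia.
case: (boolP (a \in V)) => HaV; last first.
  by rewrite /= !addn0; split.
have Hab' : a < b.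
  rewrite ltn_neqAle Hab andbT; apply/negP => /eqP E; by move: HbV; rewrite -E HaV.
rewrite /= addn0.
have [Hdead|Halive] := leqP (zeta lam b) (c b).
  have -> : zeta lam b - c b = 0 by lia.
  by split=> //.
have [a' [Ha'V /andP [Haa' Ha'b] Hw]] := @V3 lam T l c b a ltac:(lia) Halive HbV HaV Hab'.
have /andP [_ Hca'] := V1 Ha'V.
set rb := zeta lam b - c b in Hw *.
set ra' := zeta lam a' - c a' in Hw.
have Hb1 : 1 <= b <= lam1 lam by lia.
have Hzab : zeta lam b <= zeta lam a by apply: zeta_anti.
have Hrb_ra' : rb < ra'.
  rewrite ltnNge; apply/negP => Hc.
  have H1 : T a' ra' <= T b ra'.
    apply: (T_row Htab) => //; lia.
  have H2 := T_col Htab Hb1 (i := ra') (d := rb - ra') ltac:(rewrite /ra'; lia) ltac:(rewrite /rb; lia).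
  have E : ra' + (rb - ra') = rb by lia.
  rewrite E in H2.
  lia.
have [HR' HQ'] := HI a a' Hla Haa' ltac:(lia).
split; first by lia.
move=> d Hd.
set z := T b (rb - d).
set Lb := T b rb.
set w := T a' ra' in Hw.
have Hwc : c a < Nc lam pi a w.
  have := HQ' 0 ltac:(rewrite /ra'; lia); rewrite addn0 subn0 //.
have Hzd : z + d <= Lb.
  have := T_col Htab Hb1 (i := rb - d) (d := d) ltac:(lia) ltac:(rewrite /rb; lia).
  have E : rb - d + d = rb by lia.
  by rewrite E.
have Hz1 : 1 <= z <= n by apply: (T_range Htab); rewrite ?Hb1 //; rewrite /rb; lia.
have HL1 : 1 <= Lb <= n by apply: (T_range Htab); rewrite ?Hb1 //; rewrite /rb; lia.
have Hzanb : zeta lam a <= n := zeta_le_n _ Hp.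
have Hsize : size pi = n by rewrite (perm_size Hpi) size_iota.
have Huniq : uniq pi by rewrite (perm_uniq Hpi) iota_uniq.
case: (classic (exists y, [/\ z <= y, y <= Lb & y \notin take (zeta lam a) pi])) => [[y [Hy1 Hy2 Hy3]]|HX].
-
  have Hdrop : count (fun p => z <= p) (drop (zeta lam b) (take (zeta lam a) pi))
             = size (drop (zeta lam b) (take (zeta lam a) pi)).
    apply/eqP; rewrite -all_count; apply/allP => p /(nthP 0) [i Hi Ep].
    rewrite leqNgt; apply/negP => Hpz.
    have Hi' : zeta lam b + i < zeta lam a.
      move: Hi; rewrite size_drop (size_take_zeta _ Hp Hpi); lia.
    have Ep' : nth 0 pi (zeta lam b + i) = p by rewrite -Ep nth_drop nth_take.
    have Hyin : y \in pi by rewrite (perm_mem Hpi) mem_iota; lia.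
    set i2 := index y pi.
    have Hi2n : i2 < n by rewrite -Hsize index_mem.
    have Hi2a : zeta lam a <= i2 by rewrite leqNgt -in_take.
    have := FY Hp Hpi Hle Hb1 (i := rb) ltac:(rewrite /rb; lia).
    rewrite /Nc => Hcnt.
    have /hasP [p0 Hp0 Hp0L] : has (fun p => Lb <= p) (take (zeta lam b) pi) by rewrite has_count; exact: (leq_ltn_trans (leq0n _) Hcnt).
    have Hp0a : p0 \in take (zeta lam a) pi.
      have E := @take_takel _ (zeta lam b) (zeta lam a) pi Hzab.
      by move: Hp0; rewrite -E => /mem_take.
    have Hyp0 : y < p0.
      rewrite ltn_neqAle; apply/andP; split; last exact: leq_trans Hy2 Hp0L.
      by apply/eqP => E; move: Hy3; rewrite E Hp0a.
    set i0 := index p0 pi.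
    have Hi0 : i0 < zeta lam b by apply: index_ltn.
    have Ei0 : nth 0 pi i0 = p0 by rewrite nth_index // (mem_take Hp0).
    have Ei2 : nth 0 pi i2 = y by rewrite nth_index.
    apply: (no312 Hp Hno (i0 := i0) (i1 := zeta lam b + i) (i2 := i2) (zb := zeta lam b) (za := zeta lam a)).
    + apply: zeta_in_R => //; move: Hi' Hi2a Hi2n; clear; lia.
    + apply: zeta_in_R; [move: Hla Hl Hab Hbl; clear; lia | move: Hi2a Hi2n; clear; lia].
    + done.
    + exact: leq_addr.
    + done.
    + done.
    + done.
    + by rewrite Ep' Ei2 Ei0 (leq_trans Hpz Hy1) Hyp0.
  have Esplit : Nc lam pi a z = Nc lam pi b z + count (fun p => z <= p) (drop (zeta lam b) (take (zeta lam a) pi)).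
    rewrite /Nc -count_cat -{1}(cat_take_drop (zeta lam b) (take (zeta lam a) pi)).
    by rewrite take_takel.
  have HFY := FY Hp Hpi Hle Hb1 (i := rb - d) ltac:(rewrite /rb; lia).
  move: Esplit; rewrite Hdrop size_drop (size_take_zeta _ Hp Hpi) => ->.
  move: HFY; rewrite -/z /rb; lia.
-
  have Hall : forall y, z <= y <= Lb -> y \in take (zeta lam a) pi.
    move=> y /andP [H1 H2]; apply/negPn/negP => H3; apply: HX; by exists y.
  have H1 : count (fun p => z <= p <= Lb) (take (zeta lam a) pi) + count (fun p => w <= p) (take (zeta lam a) pi)
            <= Nc lam pi a z.
    apply: count_pw => x /=; case: (leqP z x); case: (leqP x Lb); case: (leqP w x) => //= *; lia.
  have H2 : Lb - z + 1 <= count (fun p => z <= p <= Lb) (take (zeta lam a) pi).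
    rewrite -size_filter -[Lb - z + 1](size_iota z).
    apply: uniq_leq_size; first exact: iota_uniq.
    move=> y; rewrite mem_iota mem_filter => Hy.
    have Hy' : z <= y <= Lb by lia.
    by rewrite Hy' Hall.
  move: Hwc H1; rewrite /Nc; lia.
Qed.

Lemma inv_all n lam pi T l : 1 <= n -> is_partition n lam -> is_perm n pi ->
  is_tableau n lam T -> tab_le lam T (key lam pi) -> ~ R_312_containing n lam pi -> 1 <= l ->
  forall t, (forall j, state lam T l t j <= zeta lam j) /\
  (forall a b, l <= a -> a <= b -> b <= lam1 lam ->
     zeta lam b - state lam T l t b <= zeta lam a - state lam T l t a /\
     forall d, d < zeta lam b - state lam T l t b ->
       state lam T l t a + d < Nc lam pi a (T b (zeta lam b - state lam T l t b - d))).
Proof.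
move=> Hn Hp Hpi Htab Hle Hno Hl; elim=> [|t [HC HI]].
- split=> // a b Hla Hab Hbl; rewrite /= !subn0; split; first exact: zeta_anti.
  move=> d Hd.
  have Hb1 : 1 <= b <= lam1 lam by lia.
  have := FY Hp Hpi Hle Hb1 (i := zeta lam b - d) ltac:(lia).
  have E : zeta lam b - (zeta lam b - d) = d by lia.
  rewrite E => H; apply: leq_trans H _; apply: Nc_mono; exact: Hab.
- split.
    move=> j; rewrite stateS /step; case: (boolP (j \in step_cols _ _ _ _)) => Hj.
      by have /andP [_ ?] := V1 Hj; rewrite /=; lia.
    by rewrite addn0.
  move=> a b Hla Hab Hbl; rewrite stateS.
  exact: (inv_step Hn Hp Hpi Htab Hle Hno Hl HC HI Hla Hab Hbl).
Qed.

Lemma ivt (f : nat -> nat) : f 0 = 0 -> (forall t, f t.+1 <= (f t).+1) ->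
  (forall t, f t <= f t.+1) -> forall s c, c < f s -> exists t, [/\ t < s, f t = c & f t.+1 = c.+1].
Proof.
move=> H0 H1 H2; elim=> [|s IH] c Hc; first by rewrite H0 in Hc.
case: (ltnP c (f s)) => Hcs.
  by have [t [Ht E1 E2]] := IH c Hcs; exists t; split => //; lia.
exists s; have := H1 s; split => //; lia.
Qed.

Lemma foldr_max_le (s : seq nat) K : (forall x, x \in s -> x <= K) -> foldr maxn 0 s <= K.
Proof.
elim: s => [|x s IH] H //=.
rewrite geq_max H ?mem_head //; apply: IH => y Hy; apply: H; by rewrite inE Hy orbT.
Qed.

Theorem proposition6p2 (n : nat) (lam : seq nat) (pi : seq nat)
    (T : nat -> nat -> nat) :
  1 <= n ->
  is_partition n lam ->
  R_perm n lam pi ->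
  is_tableau n lam T ->
  tab_le lam T (key lam pi) ->
  (exists l k, is_box lam l k /\ key lam pi l k < mU lam T l k) ->
  R_312_containing n lam pi.
Proof.
move=> Hn Hp [Hpi _] Htab Hle [l [k [Hbox Hlt]]].
case: (classic (R_312_containing n lam pi)) => // Hno; exfalso.
move: Hbox; rewrite /is_box => /and4P [Hl1 Hll Hk1 Hkz].
have Hinv := inv_all Hn Hp Hpi Htab Hle Hno Hl1.
set s := zeta lam l - k.
have Hcl : forall t, t <= zeta lam l -> state lam T l t l = t.
  elim=> [|t IH] Ht //.
  have Htl := IH ltac:(lia).
  rewrite stateS /step /= Htl V2 //; last by rewrite Htl; lia.
  by rewrite addn1.
have Hsize : size pi = n by rewrite (perm_size Hpi) size_iota.
have Hkey1 : 1 <= key lam pi l k.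
  rewrite /key.
  have Hs : size (sort leq (take (zeta lam l) pi)) = zeta lam l.
    by rewrite size_sort (size_take_zeta _ Hp Hpi).
  have : nth 0 (sort leq (take (zeta lam l) pi)) k.-1 \in pi.
    apply: (@mem_take (zeta lam l)); rewrite -(mem_sort leq); apply: mem_nth.
    have := prednK Hk1; rewrite Hs; lia.
  by rewrite (perm_mem Hpi) mem_iota => /andP [].
have HU : forall u, u \in U_entries lam T l k -> u <= key lam pi l k.
  move=> u /mapP [p Hp' ->]; move: Hp'; rewrite mem_filter => /andP [Hnh /allpairsPdep [j [i [Hj Hi Ep]]]].
  rewrite Ep /=.
  move: Hj Hi; rewrite mem_index_iota mem_iota => Hj Hi.
  have [HC HI] := Hinv s.
  set c := state lam T l s.
  have Hir : i <= zeta lam j - c j.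
    rewrite leqNgt; apply/negP => Hlt'.
    have Hz : zeta lam j - i < c j by lia.
    have Hs1 : forall t, state lam T l t.+1 j <= (state lam T l t j).+1.
      by move=> t; rewrite stateS /step; case: (_ \in _); rewrite /=; lia.
    have Hs2 : forall t, state lam T l t j <= state lam T l t.+1 j.
      by move=> t; rewrite stateS /step; lia.
    have [t [Hts E1 E2]] := @ivt (fun t => state lam T l t j) erefl Hs1 Hs2 s (zeta lam j - i) Hz.
    have HjV : j \in step_cols lam T l (state lam T l t).
      move: E2; rewrite stateS /step E1; case: (j \in _) => //= ; lia.
    move/hasP: Hnh; apply; exists (zeta lam l - t).
      rewrite mem_index_iota; lia.
    rewrite /scan_path.
    have -> : zeta lam l - (zeta lam l - t) = t by lia.
    apply/mapP; exists j => //; rewrite E1 Ep; congr (_, _); lia.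
  have Hlj : l <= j by move: Hj; clear; lia.
  have Hjl : j <= lam1 lam by move: Hj; clear; lia.
  have [HR HQ] := HI l j (leqnn _) Hlj Hjl.
  have Hj1 : 1 <= j <= lam1 lam by move: Hj Hl1; clear; lia.
  have Hi1 : 1 <= i by move: Hi; clear; lia.
  have Hid : i + (zeta lam j - c j - i) <= zeta lam j by move: Hir; clear; lia.
  have := T_col Htab Hj1 (i := i) (d := zeta lam j - c j - i) Hi1 Hid.
  have E : i + (zeta lam j - c j - i) = zeta lam j - c j by move: Hir; clear; lia.
  rewrite E => Hcol.
  have Hr1 : 0 < zeta lam j - c j by move: Hi Hir; clear; lia.
  have Hsl : s <= zeta lam l by rewrite /s; clear; lia.
  have := HQ 0 Hr1; rewrite addn0 subn0 (Hcl s Hsl) => Hq.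
  have Hl1' : 1 <= k <= zeta lam l by move: Hk1 Hkz; clear; lia.
  have Hq' : zeta lam l - k < Nc lam pi l (T j (zeta lam j - c j)) by exact: Hq.
  have := key_from_count Hp Hpi Hl1' Hq'.
  move: Hcol; clear; lia.
have : mU lam T l k <= key lam pi l k.
  rewrite /mU; case E: (U_entries lam T l k) => [|u U'] //.
  apply: foldr_max_le => x Hx; apply: HU; by rewrite E.
lia.
Qed.
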